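(* Let $f_0,\dots,f_n$ be meromorphic functions. For all $x\in\mathbb{C}$ with $|x|>\mathcal{R}(n,q)$ and every choice $\delta_0,\dots,\delta_{n-1}\in\{1,-1\}$, $$\mathcal{W}(f_0,\dots,f_n)(x)=\det\big(\eta_q^{\delta_i(n-i)}\mathcal{D}_q^if_j\big)_{0\le i,j\le n}(x)$$ (with $\delta_n(n-n)=0$, so the last row is $\mathcal{D}_q^nf_j$), and $$\mathcal{W}(f_0,\dots,f_n)(x)=\det\big(\eta_q^{n-2i}f_j\big)_{0\le i,j\le n}(x)\cdot\prod_{i=1}^{n}\prod_{j=1}^{i}\frac{-1}{\eta_q^{i-2j+2}x-\eta_q^{i-2j}x}.$$
   Context: Fix $q\in\mathbb{C}$ with $0<|q|<1$. Every $x\in\mathbb{C}$ is written uniquely as $x=\frac{z+z^{-1}}{2}$ with $|z|\ge 1$ (when $|z|=1$, $z=x+i\sqrt{1-x^2}$). $(\eta_q f)(x)=f\big(\tfrac{q^{1/2}z+q^{-1/2}z^{-1}}{2}\big)$, $(\eta_q^{-1}f)(x)=f\big(\tfrac{q^{-1/2}z+q^{1/2}z^{-1}}{2}\big)$, $\eta_q^0f=f$, $\eta_q^{k}=\eta_q\circ\eta_q^{k-1}$, $\eta_q^{-k}=\eta_q^{-1}\circ\eta_q^{-(k-1)}$; $(\eta_{q^{\pm k}}f)(x)=f\big(\tfrac{q^{\pm k/2}z+q^{\mp k/2}z^{-1}}{2}\big)$; $\eta_q^kx$ denotes $\eta_q^k$ applied to the identity map. $\mathcal{R}(n,q)>0$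 is a constant such that for $|x|>\mathcal{R}(n,q)$ (e.g. whenever $|z|>|q|^{-n/2}$) one has $\eta_q^{\pm k}f=\eta_{q^{\pm k}}f$ for $0\le k\le n$ and $\eta_q^{-m_1}\eta_q^{m_2}=\eta_q^{m_2}\eta_q^{-m_1}=\eta_q^{m_2-m_1}$ for $0\le m_1,m_2\le n$. Askey-Wilson operator $(\mathcal{D}_qf)(x)=\frac{(\eta_qf)(x)-(\eta_q^{-1}f)(x)}{\eta_qx-\eta_q^{-1}x}$ ($x\ne\pm1$; limit at $\pm1$), $\mathcal{D}_q^0f=f$, $\mathcal{D}_q^k=\mathcal{D}_q\circ\mathcal{D}_q^{k-1}$; $(\mathcal{A}_{q^k}f)(x)=\frac{(\eta_{q^k}f)(x)+(\eta_{q^{-k}}f)(x)}{2}$, $\mathcal{A}_{q^0}f=f$. The Askey-Wilson Wronskian-Casorati determinant is $\mathcal{W}(f_0,\dots,f_n)(x)=\det\big(\mathcal{A}_{q^{n-i}}\mathcal{D}_q^{i}f_j\big)_{0\le i,j\le n}(x)$ (row index $i$, column index $j$). *)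

(* Defs.v *)
From HB Require Import structures.
From mathcomp Require Import all_boot all_order all_algebra.
From mathcomp Require Import complex.
From mathcomp Require Import reals.
Set Implicit Arguments. Unset Strict Implicit. Unset Printing Implicit Defensive.
Import Order.TTheory GRing.Theory Num.Theory.
Local Open Scope ring_scope.

Section AW.
Variable R : realType.
Notation C := R[i].
(* s is the fixed square root q^{1/2} of q; q^{k/2} := s^k. *)
Variable s : C.

(* The representation x = (z + z^-1)/2 with |z| >= 1; when |z| = 1,
   z = x + i sqrt(1 - x^2).  w below is a root of z^2 - 2 x z + 1 = 0,
   the other root being w^-1. *)
Definition zrep (x : C) : C :=
  let w := x + 'i * sqrtC (1 - x ^+ 2) in
  if 1 <= `|w| then w else w^-1.

Definition eta_pow (k : int) (f : C -> C) : C -> C :=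
  fun x => let z := zrep x in f ((s ^ k * z + s ^ (- k) * z^-1) / 2%:R).

Definition eta1 (f : C -> C) : C -> C := eta_pow 1 f.
Definition etam1 (f : C -> C) : C -> C := eta_pow (-1) f.

Definition eta_it (k : int) (f : C -> C) : C -> C :=
  match k with
  | Posz m => iter m eta1 f
  | Negz m => iter m.+1 etam1 f
  end.

(* Askey-Wilson operator; at x = +-1 the paper takes a limit. That value
   is never used in the region of the theorem; we put 0. *)
Definition Dq (f : C -> C) : C -> C :=
  fun x => if (x == 1) || (x == -1) then 0
           else (eta1 f x - etam1 f x) / (eta1 id x - etam1 id x).

Definition Dq_it (k : nat) (f : C -> C) : C -> C := iter k Dq f.

Definition Aq (k : nat) (f : C -> C) : C -> C :=
  fun x => if k == 0%N then f x
           else (eta_pow k%:Z f x + eta_pow (- k%:Z) f x) / 2%:R.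

Definition AWW (n : nat) (fs : 'I_n.+1 -> C -> C) (x : C) : C :=
  \det (\matrix_(i < n.+1, j < n.+1) Aq (n - i) (Dq_it i (fs j)) x).

(* The constant R(n,q): for |x| > Rnq n, one has |z| > |q|^{-n/2}. *)
Definition Rnq (n : nat) : C := (`|s| ^- n + `|s| ^+ n) / 2%:R.

End AW.

(* Main.v *)
From HB Require Import structures.
From mathcomp Require Import all_boot all_order all_algebra.
From mathcomp Require Import complex reals.
From mathcomp Require Import ring lra zify.
Require Import Defs.
Import Order.TTheory GRing.Theory Num.Theory.
Set Implicit Arguments. Unset Strict Implicit. Unset Printing Implicit Defensive.
Import Normc.
Local Open Scope ring_scope.
Lemma eq_sym_neq N (i0 : 'I_N) i : lift i0 i != i0.
Proof. by rewrite eq_sym neq_lift. Qed.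

Lemma det_rowadd (K : fieldType) N (A B : 'M[K]_N) (i0 : 'I_N) :
  (forall i, i != i0 -> row i A = row i B) ->
  (row i0 A - row i0 B <= \matrix_(i, j) if (i0 < i)%N then B i j else 0)%MS ->
  \det A = \det B.
Proof.
move=> hrow hsub.
set v := row i0 A - row i0 B.
set C := \matrix_(i, j) if i == i0 then v 0 j else B i j.
have hC : \det C = 0.
  apply/eqP/det0P.
  case/submxP: hsub => Dm hD.
  exists (\row_k (if (i0 < k)%N then Dm 0 k else 0) - \row_k ((k == i0)%:R : K)).
    apply/eqP => /rowP /(_ i0); rewrite !mxE ltnn eqxx sub0r => /eqP.
    by rewrite oppr_eq0 oner_eq0.
  apply/rowP => j; rewrite !mxE.
  under eq_bigr => k _ do rewrite !mxE mulrBl.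
  rewrite sumrB [X in _ - X](bigD1 i0) //= [X in _ - (_ + X)]big1; last first.
    by move=> k /negbTE ->; rewrite mul0r.
  rewrite eqxx mul1r addr0.
  have -> : A i0 j - B i0 j = (Dm *m \matrix_(i, j) if (i0 < i)%N then B i j else 0) 0 j.
    by rewrite -hD !mxE.
  rewrite !mxE; apply/eqP; rewrite subr_eq0; apply/eqP; apply: eq_bigr => k _; rewrite !mxE.
  case: ltnP => hk; last by rewrite mul0r mulr0.
  by rewrite ifF //; apply/negbTE; rewrite -val_eqE /= gtn_eqF.
have := @determinant_multilinear K N A B C i0 1 1.
rewrite hC mulr0 addr0 mul1r; apply.
- by apply/rowP => j; rewrite !mxE eqxx !mul1r addrC subrK.
- apply/matrixP => i j; rewrite !mxE.
  have := congr1 (fun M : 'rV_N => M 0 j) (hrow (lift i0 i) (@eq_sym_neq _ i0 i)).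
  by rewrite !mxE.
- apply/matrixP => i j; rewrite !mxE (negbTE (@eq_sym_neq _ i0 i)).
  have := congr1 (fun M : 'rV_N => M 0 j) (hrow (lift i0 i) (@eq_sym_neq _ i0 i)).
  by rewrite !mxE.
Qed.
Definition Arow (K : numFieldType) n (V : nat -> nat -> 'rV[K]_n.+1) (i : nat) :=
  (2%:R)^-1 *: (V i 0%N + V i (n - i)%N).
Definition Sl (K : numFieldType) n (V : nat -> nat -> 'rV[K]_n.+1) (l : nat) :=
  \matrix_(i < n.+1, j < n.+1) if (l <= i)%N then Arow V i 0 j else 0.
Definition recH (K : numFieldType) n (V : nat -> nat -> 'rV[K]_n.+1) (D : nat -> nat -> K) :=
  forall l k, (l < n)%N -> (k < n - l)%N -> V l k - V l k.+1 = D l k *: V l.+1 k.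

Lemma Sl_row (K : numFieldType) n (V : nat -> nat -> 'rV[K]_n.+1) l (i : 'I_n.+1) :
  (l <= i)%N -> row i (Sl V l) = Arow V i.
Proof. by move=> h; apply/rowP => j; rewrite !mxE h. Qed.

Lemma Sl_mono (K : numFieldType) n (V : nat -> nat -> 'rV[K]_n.+1) l l' :
  (l <= l')%N -> (Sl V l' <= Sl V l)%MS.
Proof.
move=> hl; apply/row_subP => i.
case: (leqP l' i) => h.
  rewrite Sl_row //; apply: (@eq_row_sub _ _ _ _ _ i); rewrite Sl_row //.
  exact: leq_trans hl h.
have -> : row i (Sl V l') = 0 by apply/rowP => j; rewrite !mxE leqNgt h.
exact: sub0mx.
Qed.

Lemma Arow_sub (K : numFieldType) n (V : nat -> nat -> 'rV[K]_n.+1) l i :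
  (l <= i)%N -> (i < n.+1)%N -> (Arow V i <= Sl V l)%MS.
Proof.
move=> hl hi; apply: (@eq_row_sub _ _ _ _ _ (Ordinal hi)); exact: Sl_row.
Qed.

Lemma diff_sub (K : numFieldType) n (V : nat -> nat -> 'rV[K]_n.+1) D :
  recH V D -> forall l, (l < n)%N ->
  (forall k, (k <= n - l.+1)%N -> (V l.+1 k <= Sl V l.+1)%MS) ->
  forall k d, (k + d <= n - l)%N -> (V l k - V l (k + d)%N <= Sl V l.+1)%MS.
Proof.
move=> hr l hl hV k; elim=> [|d IH] hkd.
  by rewrite addn0 subrr sub0mx.
have -> : V l k - V l (k + d.+1)%N =
   (V l k - V l (k + d)%N) + (V l (k + d)%N - V l (k + d)%N.+1).
  by rewrite addnS addrA subrK.
apply: addmx_sub; first by apply: IH; lia.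
rewrite hr //; last by lia.
apply: scalemx_sub; apply: hV; lia.
Qed.

Lemma span_sub (K : numFieldType) n (V : nat -> nat -> 'rV[K]_n.+1) D :
  recH V D -> forall p, (p <= n)%N -> forall k, (k <= p)%N ->
  (V (n - p)%N k <= Sl V (n - p))%MS.
Proof.
move=> hr; elim=> [|p IH] hp k hk.
  have hk0 : k = 0%N by lia.
  rewrite hk0 subn0.
  have -> : V n 0%N = Arow V n.
    by rewrite /Arow subnn -mulr2n -scaler_nat scalerA mulVf ?scale1r // pnatr_eq0.
  by apply: Arow_sub.
set l := (n - p.+1)%N.
have hl : (l < n)%N by rewrite /l; lia.
have hl1 : l.+1 = (n - p)%N by rewrite /l; lia.
have hV : forall k, (k <= n - l.+1)%N -> (V l.+1 k <= Sl V l.+1)%MS.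
  move=> k' hk'; rewrite hl1; apply: IH; lia.
have hS : (Sl V l.+1 <= Sl V l)%MS by apply: Sl_mono.
have -> : V l k = Arow V l + 2%:R^-1 *: (- (V l 0%N - V l (0 + k)%N))
                 + 2%:R^-1 *: (V l k - V l (k + (n - l - k))%N).
  have e : (k + (n - l - k))%N = (n - l)%N by rewrite /l; lia.
  rewrite add0n e; apply/rowP => j; rewrite /Arow !mxE.
  by field.
apply: addmx_sub; first apply: addmx_sub.
- apply: Arow_sub => //; lia.
- apply: scalemx_sub; rewrite -scaleN1r; apply: scalemx_sub.
  apply: submx_trans hS; apply: (diff_sub hr) => //; lia.
- apply: scalemx_sub.
  apply: submx_trans hS; apply: (diff_sub hr) => //; lia.
Qed.

Lemma core1 (K : numFieldType) n (V : nat -> nat -> 'rV[K]_n.+1) D :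
  recH V D -> forall b : nat -> bool,
  \det (\matrix_(i < n.+1, j < n.+1) Arow V i 0 j) =
  \det (\matrix_(i < n.+1, j < n.+1) V i (if b i then 0%N else (n - i)%N) 0 j).
Proof.
move=> hr b.
pose H t := \matrix_(i < n.+1, j < n.+1)
   if (i < t)%N then V i (if b i then 0%N else (n - i)%N) 0 j else Arow V i 0 j.
have step : forall t (ht : (t < n.+1)%N), \det (H t.+1) = \det (H t).
  move=> t ht; apply: (@det_rowadd _ _ _ _ (Ordinal ht)).
    move=> i hi; apply/rowP => j; rewrite !mxE ltnS leq_eqVlt.
    by rewrite (negbTE (hi : (i : nat) != t)).
  have -> : \matrix_(i, j) (if (Ordinal ht < i)%N then H t i j else 0) = Sl V t.+1.
    apply/matrixP => i j; rewrite !mxE /=.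
    by case: ltnP => h //; rewrite ltnNge ltnW.
  have hrow1 : row (Ordinal ht) (H t.+1) = V t (if b t then 0%N else (n - t)%N).
    by apply/rowP => j; rewrite !mxE /= ltnSn.
  have hrow2 : row (Ordinal ht) (H t) = Arow V t.
    by apply/rowP => j; rewrite !mxE /= ltnn.
  rewrite hrow1 hrow2.
  case: (ltnP t n) => htn; last first.
    have -> : t = n by lia.
    rewrite /Arow subnn if_same -mulr2n -scaler_nat scalerA mulVf ?pnatr_eq0 //.
    by rewrite scale1r subrr sub0mx.
  have hV : forall k, (k <= n - t.+1)%N -> (V t.+1 k <= Sl V t.+1)%MS.
    move=> k hk; have e : t.+1 = (n - (n - t.+1))%N by lia.
    rewrite e; apply: (span_sub hr); lia.
  have hd := diff_sub hr htn hV (k := 0%N) (d := (n - t)%N) (leqnn _).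
  rewrite add0n in hd.
  case: (b t).
    have -> : V t 0%N - Arow V t = 2%:R^-1 *: (V t 0%N - V t (n - t)%N).
      by apply/rowP => j; rewrite /Arow !mxE; field.
    exact: scalemx_sub.
  have -> : V t (n - t)%N - Arow V t = (- 2%:R^-1) *: (V t 0%N - V t (n - t)%N).
    by apply/rowP => j; rewrite /Arow !mxE; field.
  exact: scalemx_sub.
have all : forall t, (t <= n.+1)%N -> \det (H 0%N) = \det (H t).
  elim=> [//|t IH] ht; rewrite step //; apply: IH; lia.
have e0 : H 0%N = \matrix_(i < n.+1, j < n.+1) Arow V i 0 j.
  by apply/matrixP => i j; rewrite !mxE.
have e1 : H n.+1 = \matrix_(i < n.+1, j < n.+1) V i (if b i then 0%N else (n - i)%N) 0 j.
  by apply/matrixP => i j; rewrite !mxE ltn_ord.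
by rewrite -e0 -e1; apply: all.
Qed.

Fixpoint Cv (K : numFieldType) n (D : nat -> nat -> K) (l k : nat) : 'rV[K]_n.+1 :=
  match l with
  | 0%N => \row_(j < n.+1) (((j : nat) == k)%:R : K)
  | l'.+1 => (D l' k)^-1 *: (Cv n D l' k - Cv n D l' k.+1)
  end.

Fixpoint coef (K : numFieldType) (D : nat -> nat -> K) (l k : nat) : K :=
  match l with
  | 0%N => 1
  | l'.+1 => -1 / D l' k * coef D l' k.+1
  end.

Lemma Cv_mul (K : numFieldType) n (V : nat -> nat -> 'rV[K]_n.+1) D :
  recH V D -> (forall l k, (l < n)%N -> (k < n - l)%N -> D l k != 0) ->
  forall l k, (l + k <= n)%N ->
  V l k = Cv n D l k *m \matrix_(i < n.+1, j < n.+1) V 0%N i 0 j.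
Proof.
move=> hr hD; elim=> [|l IH] k hk /=.
  have hk' : (k < n.+1)%N by lia.
  apply/rowP => j; rewrite !mxE (bigD1 (Ordinal hk')) //= big1.
    by rewrite !mxE eqxx mul1r addr0.
  move=> i hi; rewrite !mxE.
  have -> : ((i : nat) == k) = false.
    by apply/negbTE; apply: contra hi => /eqP h; apply/eqP/val_inj.
  by rewrite mul0r.
have hlk : (l < n)%N by lia.
have hkk : (k < n - l)%N by lia.
have := hr l k hlk hkk.
move/(congr1 (fun v => (D l k)^-1 *: v)); rewrite scalerA mulVf ?hD // scale1r => <-.
rewrite -scalemxAl mulmxBl -!IH //; lia.
Qed.

Lemma Cv_supp (K : numFieldType) n (D : nat -> nat -> K) :
  forall l k (j : 'I_n.+1), (k + l < j)%N -> Cv n D l k 0 j = 0.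
Proof.
elim=> [|l IH] k j hj /=.
  rewrite !mxE; have -> : ((j : nat) == k) = false by apply/negbTE; lia.
  by [].
rewrite !mxE IH ?IH ?subrr ?mulr0 //; lia.
Qed.

Lemma Cv_diag (K : numFieldType) n (D : nat -> nat -> K) :
  forall l k (j : 'I_n.+1), (j : nat) = (k + l)%N -> Cv n D l k 0 j = coef D l k.
Proof.
elim=> [|l IH] k j hj /=.
  by rewrite !mxE hj addn0 eqxx.
rewrite !mxE Cv_supp; last by lia.
rewrite (IH k.+1 j); last by lia.
by rewrite sub0r mulrN mulN1r mulNr.
Qed.

Lemma core2 (K : numFieldType) n (V : nat -> nat -> 'rV[K]_n.+1) D :
  recH V D -> (forall l k, (l < n)%N -> (k < n - l)%N -> D l k != 0) ->
  \det (\matrix_(i < n.+1, j < n.+1) V i 0%N 0 j) =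
  (\prod_(i < n.+1) coef D i 0%N) * \det (\matrix_(i < n.+1, j < n.+1) V 0%N i 0 j).
Proof.
move=> hr hD.
set E := \matrix_(i < n.+1, j < n.+1) V 0%N i 0 j.
set L := \matrix_(i < n.+1, j < n.+1) Cv n D i 0%N 0 j.
have -> : \matrix_(i < n.+1, j < n.+1) V i 0%N 0 j = L *m E.
  apply/row_matrixP => i; rewrite row_mul.
  have -> : row i L = Cv n D i 0%N by apply/rowP => j; rewrite !mxE.
  rewrite -(Cv_mul hr hD); last by rewrite addn0 -ltnS.
  by apply/rowP => j; rewrite !mxE.
rewrite det_mulmx det_trig; last first.
  apply/is_trig_mxP => i j hij; rewrite !mxE Cv_supp //.
congr (_ * _); apply: eq_bigr => i _; rewrite !mxE Cv_diag //.
Qed.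
Lemma comb (K : comRingType) (g : int -> K) n :
  \prod_(i < n.+1) \prod_(s < i) g (n%:Z - i%:Z - s%:Z - 1) =
  \prod_(1 <= i < n.+1) \prod_(1 <= j < i.+1) g (i%:Z - 2 * j%:Z).
Proof.
have Lr : forall n, \prod_(i < n.+1) \prod_(s < i) g (n%:Z - i%:Z - s%:Z - 1) =
              \prod_(u < n.+1) \prod_(s < n - u) g (u%:Z - s%:Z - 1).
  move=> m; rewrite (reindex_inj rev_ord_inj) /=; apply: eq_bigr => u _.
  have hu : (u <= m)%N by rewrite -ltnS.
  rewrite subSS; apply: eq_bigr => s _; congr g; lia.
rewrite Lr; elim: n => [|n IH].
  by rewrite !big_ord1 big_geq // big_ord0.
rewrite big_nat_recr //= -IH big_ord_recr /= subnn big_ord0 mulr1.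
have -> : \prod_(i < n.+1) \prod_(s < n.+1 - i) g (i%:Z - s%:Z - 1) =
   \prod_(i < n.+1) ((\prod_(s < n - i) g (i%:Z - s%:Z - 1)) * g (2 * i%:Z - n%:Z - 1)).
  apply: eq_bigr => i _.
  have hi : (i <= n)%N by rewrite -ltnS.
  rewrite subSn // big_ord_recr /=; congr (_ * g _); lia.
rewrite big_split /=; congr (_ * _).
rewrite big_add1 /= big_mkord (reindex_inj rev_ord_inj) /=.
apply: eq_bigr => i _; congr g.
have hi : (i <= n)%N by rewrite -ltnS.
lia.
Qed.
Lemma normCE (R : realType) (z : R[i]) : `|z| = (normc z)%:C%C.
Proof. by case: z => a b; rewrite normc_def. Qed.
Lemma le1C (R : realType) (r : R) : ((1 : R[i]) <= r%:C%C) = (1 <= r).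
Proof. by rewrite lecE /= eqxx. Qed.
Lemma normc_ge0 (R : realType) (z : R[i]) : 0 <= normc z.
Proof. by case: z => a b; rewrite /normc sqrtr_ge0. Qed.
Lemma normc_gt0 (R : realType) (z : R[i]) : z != 0 -> 0 < normc z.
Proof.
move=> hz; rewrite lt_def normc_ge0 andbT; apply/eqP => h.
by move/eqP: hz; apply; apply: eq0_normc.
Qed.
Lemma normcX (R : realType) (z : R[i]) k : normc (z ^+ k) = normc z ^+ k.
Proof. by elim: k => [|k IH]; rewrite ?expr0 ?normc1 // !exprS normcM IH. Qed.
Lemma normcXz (R : realType) (z : R[i]) (m : int) : normc (z ^ m) = normc z ^ m.
Proof. by case: m => k; rewrite /exprz ?normcV normcX. Qed.

Lemma zrep_quad (R : realType) (y : R[i]) :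
  let w := y + 'i * sqrtC (1 - y ^+ 2) in w ^+ 2 - 2%:R * y * w + 1 = 0.
Proof.
move=> w.
have -> : w ^+ 2 - 2%:R * y * w + 1 = 'i ^+ 2 * sqrtC (1 - y ^+ 2) ^+ 2 + 1 - y ^+ 2.
  by rewrite /w; ring.
by rewrite sqrCi sqrtCK; ring.
Qed.

Lemma zrep_eq (R : realType) (y u : R[i]) :
  1 < normc u -> y = (u + u^-1) / 2%:R -> zrep y = u.
Proof.
move=> hu hy; rewrite /zrep.
have hq := zrep_quad y; simpl in hq; set w := y + _ in hq *.
have u0 : u != 0 by apply: contraTneq hu => ->; rewrite normc0 ltr10.
have e : (w - u) * (w - u^-1) = w ^+ 2 - 2%:R * y * w + 1.
  by rewrite hy; field.
rewrite hq in e; move/eqP: e; rewrite mulf_eq0 !subr_eq0 => /orP[]/eqP ->.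
  by rewrite normCE le1C ltW.
rewrite normCE normcV le1C invf_ge1 ?(lt_trans ltr01) //.
by rewrite leNgt hu /= invrK.
Qed.

Lemma zrep_x (R : realType) (x : R[i]) :
  [/\ zrep x != 0, x = (zrep x + (zrep x)^-1) / 2%:R & 1 <= normc (zrep x)].
Proof.
rewrite /zrep.
have hq := zrep_quad x; simpl in hq; set w := x + _ in hq *.
have w0 : w != 0.
  apply/eqP => h; move: hq; rewrite h expr0n mulr0 subr0 add0r => /eqP; by rewrite oner_eq0.
have ex : x = (w + w^-1) / 2%:R.
  have e2 : w ^+ 2 + 1 = 2%:R * x * w.
    by apply/eqP; rewrite -subr_eq0 -hq; apply/eqP; ring.
  have -> : (w + w^-1) / 2%:R = (w ^+ 2 + 1) / w / 2%:R.
    by field.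
  by rewrite e2; field.
rewrite normCE le1C; case: ifP => h.
  by split.
split.
- by rewrite invr_eq0.
- by rewrite invrK addrC.
rewrite normcV invf_ge1 ?normc_gt0 //.
by apply: ltW; rewrite ltNge h.
Qed.

Definition uu (R : realType) (s z : R[i]) (m : int) := s ^ m * z.
Definition Xp (R : realType) (s z : R[i]) (m : int) :=
  (uu s z m + (uu s z m)^-1) / 2%:R.
Definition del (R : realType) (s z : R[i]) (h : int -> R[i]) (m : int) :=
  (h (m + 1) - h (m - 1)) / (Xp s z (m + 1) - Xp s z (m - 1)).

Lemma uu_neq0 (R : realType) (s z : R[i]) m : 1 < normc (uu s z m) -> uu s z m != 0.
Proof. by move=> h; apply: contraTneq h => ->; rewrite normc0 ltr10. Qed.

Lemma uuD (R : realType) (s z : R[i]) m k : s != 0 -> uu s z (m + k) = s ^ k * uu s z m.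
Proof. by move=> hs; rewrite /uu expfzDr // mulrA [s ^ k * _]mulrC. Qed.

Lemma eta_pow_Xp (R : realType) (s z : R[i]) (k m : int) (g : R[i] -> R[i]) :
  s != 0 -> 1 < normc (uu s z m) ->
  eta_pow s k g (Xp s z m) = g (Xp s z (m + k)).
Proof.
move=> hs hu; rewrite /eta_pow (zrep_eq hu erefl); congr g.
rewrite /Xp uuD // -invr_expz.
have h1 := uu_neq0 hu.
have h2 : s ^ k != 0 by rewrite expfz_neq0.
by rewrite [in RHS]invfM.
Qed.

Lemma eta_it_Xp (R : realType) (s z : R[i]) n (g : R[i] -> R[i]) :
  s != 0 -> (forall m : int, m <= n%:Z -> 1 < normc (uu s z m)) ->
  forall k m : int, m <= n%:Z -> m + k <= n%:Z ->
  eta_it s k g (Xp s z m) = g (Xp s z (m + k)).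
Proof.
move=> hs hU [] k m hm hmk /=.
  elim: k m hm hmk => [|k IH] m hm hmk; first by rewrite addr0.
  rewrite iterS /eta1 eta_pow_Xp ?hU // IH; first (congr (g (Xp _ _ _)); lia).
  - lia.
  - lia.
have : forall j m, m <= n%:Z -> iter j (etam1 s) g (Xp s z m) = g (Xp s z (m - j%:Z)).
  elim=> [|j IH] m' hm'; first by rewrite subr0.
  rewrite iterS /etam1 eta_pow_Xp ?hU // IH; first (congr (g (Xp _ _ _)); lia).
  lia.
move=> h; rewrite -iterS h // NegzE; congr (g (Xp _ _ _)); lia.
Qed.

Lemma Xp_neq1 (R : realType) (s z : R[i]) m :
  1 < normc (uu s z m) -> (Xp s z m != 1) && (Xp s z m != -1).
Proof.
move=> hu; have u0 := uu_neq0 hu.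
have hn1 : uu s z m != 1 by apply: contraTneq hu => ->; rewrite normc1 ltxx.
have hn2 : uu s z m != -1 by apply: contraTneq hu => ->; rewrite normcN normc1 ltxx.
apply/andP; split.
  apply: contra hn1 => /eqP h.
  have e : (uu s z m - 1) ^+ 2 = uu s z m * (2%:R * Xp s z m - 2%:R).
    by rewrite /Xp; field.
  by move: e; rewrite h mulr1 subrr mulr0 => /eqP; rewrite expf_eq0 /= subr_eq0.
apply: contra hn2 => /eqP h.
have e : (uu s z m + 1) ^+ 2 = uu s z m * (2%:R * Xp s z m + 2%:R).
  by rewrite /Xp; field.
by move: e; rewrite h mulrN1 addNr mulr0 => /eqP; rewrite expf_eq0 /= addr_eq0.
Qed.

Lemma Dq_Xp (R : realType) (s z : R[i]) m (g : R[i] -> R[i]) :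
  s != 0 -> 1 < normc (uu s z m) ->
  Dq s g (Xp s z m) = del s z (fun k => g (Xp s z k)) m.
Proof.
move=> hs hu; rewrite /Dq; case/andP: (Xp_neq1 hu) => /negbTE -> /negbTE -> /=.
by rewrite /eta1 /etam1 !eta_pow_Xp.
Qed.

Lemma Dq_it_Xp (R : realType) (s z : R[i]) n (g : R[i] -> R[i]) :
  s != 0 -> (forall m : int, m <= n%:Z -> 1 < normc (uu s z m)) ->
  forall i (m : int), m + i%:Z <= n%:Z ->
  Dq_it s i g (Xp s z m) = iter i (del s z) (fun k => g (Xp s z k)) m.
Proof.
move=> hs hU; elim=> [|i IH] m hm //=.
rewrite [Dq_it _ _ _]/= Dq_Xp //; last by apply: hU; lia.
rewrite /del !IH //; lia.
Qed.

Lemma Dnz (R : realType) (s z : R[i]) m :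
  s != 0 -> s ^+ 2 != 1 -> 1 < normc (uu s z m) ->
  Xp s z (m + 1) - Xp s z (m - 1) != 0.
Proof.
move=> hs hs2 hu; have u0 := uu_neq0 hu.
have e : Xp s z (m + 1) - Xp s z (m - 1) =
   (s - s^-1) * (uu s z m - (uu s z m)^-1) / 2%:R.
  rewrite /Xp uuD // uuD // expr1z exprN1. move: (uu s z m) u0 => u u0. by field; rewrite u0 hs.
rewrite e !mulf_neq0 ?invr_eq0 ?pnatr_eq0 //.
  apply: contra hs2; rewrite subr_eq0 => /eqP h; apply/eqP.
  by rewrite expr2 {1}h mulVf.
rewrite subr_eq0; apply/negP => /eqP h.
have : uu s z m ^+ 2 = 1 by rewrite expr2 {1}h mulVf.
move/(congr1 (@normc R)); rewrite normcX normc1.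
move: hu; set t := normc _ => hu ht.
have : 1 * 1 < t ^+ 2 by rewrite expr2 ltr_pM //.
by rewrite ht mulr1 ltxx.
Qed.
Lemma coefE (K : numFieldType) (D : nat -> nat -> K) l k :
  coef D l k = \prod_(s < l) (-1 / D (l - s.+1)%N (k + s)%N).
Proof.
elim: l k => [|l IH] k /=; first by rewrite big_ord0.
rewrite IH big_ord_recl /= subn1 /= addn0; congr (_ * _).
by apply: eq_bigr => i _; rewrite subSS addSnnS.
Qed.

Lemma ltC (R : realType) (a b : R) : (a%:C%C < b%:C%C) = (a < b).
Proof. by rewrite ltcE /= eqxx. Qed.
Lemma leC (R : realType) (a b : R) : (a%:C%C <= b%:C%C) = (a <= b).
Proof. by rewrite lecE /= eqxx. Qed.

Lemma Rnq_real (R : realType) (s : R[i]) n :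
  Rnq s n = ((normc s ^- n + normc s ^+ n) / 2%:R)%:C%C.
Proof.
rewrite /Rnq normCE rmorphM rmorphD fmorphV !rmorphXn fmorphV.
by rewrite rmorph_nat.
Qed.

Lemma normc2 (R : realType) : normc (2%:R : R[i]) = 2%:R.
Proof. by rewrite normcMn normc1. Qed.

Lemma lt0C (R : realType) (r : R) : ((0 : R[i]) < r%:C%C) = (0 < r).
Proof. by rewrite ltcE /= eqxx. Qed.
Lemma ltC1 (R : realType) (r : R) : (r%:C%C < (1 : R[i])) = (r < 1).
Proof. by rewrite ltcE /= eqxx. Qed.

Lemma setup (R : realType) (q s x : R[i]) n :
  s ^+ 2 = q -> 0 < `|q| -> `|q| < 1 -> Rnq s n < `|x| ->
  [/\ s != 0, s ^+ 2 != 1, Xp s (zrep x) 0 = x &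
      forall m : int, m <= n%:Z -> 1 < normc (uu s (zrep x) m)].
Proof.
move=> hq hq0 hq1 hR.
have [z0 zx z1] := zrep_x x.
set z := zrep x in z0 zx z1 *.
set ns := normc s.
have nq : normc q = ns ^+ 2 by rewrite -hq normcX.
rewrite normCE lt0C nq in hq0; rewrite normCE ltC1 nq in hq1.
have ns0 : 0 <= ns := normc_ge0 s.
have ns_pos : 0 < ns.
  rewrite lt_def ns0 andbT; apply/eqP => h; move: hq0; rewrite h expr0n ltxx.
  done.
have ns1 : ns < 1.
  rewrite ltNge; apply/negP => h; move: hq1; rewrite ltNge => /negP; apply.
  by rewrite expr_ge1 // ltW.
have hs : s != 0 by apply/eqP => h; move: ns_pos; rewrite /ns h normc0 ltxx.
split => //.
- apply/eqP => h; have := congr1 (@normc R) h; rewrite normcX normc1 -/ns => h2.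
  by move: hq1; rewrite h2 ltxx.
- by rewrite /Xp /uu expr0z mul1r [RHS]zx.
rewrite Rnq_real normCE ltC in hR.
set nz := normc z.
have hx : normc x <= (nz + nz^-1) / 2%:R.
  rewrite {1}zx normcM normcV normc2 -normcV ler_pM2r ?invr_gt0 ?ltr0n //.
  by rewrite le_normcD.
set a := ns ^- n; set b := ns ^+ n.
have b0 : 0 < b by rewrite exprn_gt0.
have b1 : b <= 1 by rewrite exprn_ile1 // ltW.
have ab : a * b = 1 by rewrite mulVf // gt_eqF.
have nz0 : 0 < nz by apply: lt_le_trans z1; exact: ltr01.
have nzi : nz * nz^-1 = 1 by rewrite mulfV // gt_eqF.
have inz0 : 0 < nz^-1 by rewrite invr_gt0.
have inz1 : nz^-1 <= 1 by rewrite invf_le1.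
have han : a < nz.
  rewrite ltNge; apply/negP => hle.
  have : 0 <= (a - nz) * (1 - b * nz^-1).
    apply: mulr_ge0; first by rewrite subr_ge0.
    rewrite subr_ge0; rewrite -[1]mulr1; apply: ler_pM => //; exact: ltW.
  have -> : (a - nz) * (1 - b * nz^-1) = a - (a * b) * nz^-1 - nz + (nz * nz^-1) * b.
    by ring.
  rewrite ab nzi mul1r mul1r => h.
  have : (a + b) / 2%:R < (nz + nz^-1) / 2%:R := lt_le_trans hR hx.
  rewrite ltr_pM2r ?invr_gt0 ?ltr0n // ltNge => /negP; apply.
  rewrite -subr_ge0.
  have -> : a + b - (nz + nz^-1) = a - nz^-1 - nz + b by ring.
  by [].
move=> m hm.
rewrite /uu normcM normcXz -/ns -/nz.
have [k hk] : exists k : nat, m = n%:Z - k%:Z.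
  clear -hm; case: m hm => p hp; first by exists (n - p)%N; lia.
  by exists (n + p.+1)%N; rewrite NegzE; lia.
have e : ns ^ m * a = (ns ^+ k)^-1.
  by rewrite /a exprnN -expfzDr ?gt_eqF // hk addrAC subrr add0r -exprnN.
have h1 : 1 <= ns ^ m * a by rewrite e invf_ge1 ?exprn_gt0 // exprn_ile1 // ltW.
apply: (le_lt_trans h1); rewrite ltr_pM2l //.
by rewrite hk expfzDr ?gt_eqF // mulr_gt0 // ?exprn_gt0 // -exprnN invr_gt0 exprn_gt0.
Qed.

Unset Implicit Arguments.

Theorem proposition4p2 (R : realType) (q s : R[i]) (n : nat)
    (fs : 'I_n.+1 -> R[i] -> R[i]) (x : R[i]) (delta : nat -> int) :
  s ^+ 2 = q -> 0 < `|q| -> `|q| < 1 ->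
  Rnq s n < `|x| ->
  (forall i : nat, (i < n)%N -> delta i = 1 \/ delta i = -1) ->
  AWW s fs x =
    \det (\matrix_(i < n.+1, j < n.+1)
            eta_it s (delta i * (n - i)%:Z) (Dq_it s i (fs j)) x)
  /\
  AWW s fs x =
    \det (\matrix_(i < n.+1, j < n.+1)
            eta_it s (n%:Z - 2 * (i : nat)%:Z) (fs j) x) *
    \prod_(1 <= i < n.+1) \prod_(1 <= j < i.+1)
       (-1 / (eta_it s (i%:Z - 2 * j%:Z + 2) id x
              - eta_it s (i%:Z - 2 * j%:Z) id x)).
Proof.
move=> hq hq0 hq1 hR hdelta.
have [hs hs2 hx0 hU] := setup hq hq0 hq1 hR.
set z := zrep x in hx0 hU.
pose V := fun l k : nat => \row_(j < n.+1)
   iter l (del s z) (fun m => fs j (Xp s z m)) (n%:Z - l%:Z - 2 * k%:Z).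
pose D := fun l k : nat =>
   Xp s z (n%:Z - l%:Z - 2 * k%:Z) - Xp s z (n%:Z - l%:Z - 2 * k%:Z - 2).
have hD : forall l k, (l < n)%N -> (k < n - l)%N ->
   D l k = Xp s z ((n%:Z - l.+1%:Z - 2 * k%:Z) + 1) - Xp s z ((n%:Z - l.+1%:Z - 2 * k%:Z) - 1).
  move=> l k hl hk; rewrite /D; congr (Xp _ _ _ - Xp _ _ _); lia.
have hDnz : forall l k, (l < n)%N -> (k < n - l)%N -> D l k != 0.
  move=> l k hl hk; rewrite hD //; apply: Dnz => //; apply: hU; lia.
have hrec : recH V D.
  move=> l k hl hk; apply/rowP => j; rewrite !mxE iterS {3}/del -hD //.
  have e1 : (n%:Z - l.+1%:Z - 2 * k%:Z) + 1 = n%:Z - l%:Z - 2 * k%:Z by lia.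
  have e2 : (n%:Z - l.+1%:Z - 2 * k%:Z) - 1 = n%:Z - l%:Z - 2 * k.+1%:Z by lia.
  by rewrite e1 e2 [RHS]mulrC divfK ?hDnz.
have ev : forall (g : R[i] -> R[i]) (i : nat) (k : int), k + i%:Z <= n%:Z ->
    eta_it s k (Dq_it s i g) x = iter i (del s z) (fun m => g (Xp s z m)) k.
  move=> g i k hk; rewrite -hx0 (eta_it_Xp _ hs hU); try lia.
  by rewrite add0r (Dq_it_Xp _ hs hU).
have hA : AWW s fs x = \det (\matrix_(i < n.+1, j < n.+1) Arow V i 0 j).
  rewrite /AWW; congr (\det _); apply/matrixP => i j; rewrite !mxE /Aq.
  have hi : (i <= n)%N by rewrite -ltnS.
  case: eqP => h.
    have hin : (i : nat) = n by lia.
    have -> : Dq_it s i (fs j) x = eta_it s 0 (Dq_it s i (fs j)) x by [].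
    rewrite ev; last by lia.
    have e1 : n%:Z - i%:Z - 2 * 0%:Z = 0 by lia.
    have e2 : n%:Z - i%:Z - 2 * (n - i)%N%:Z = 0 by lia.
    by rewrite e1 e2; field.
  rewrite -hx0 !eta_pow_Xp ?hU // !add0r !(Dq_it_Xp _ hs hU); try lia.
  have e1 : n%:Z - i%:Z - 2 * 0%:Z = (n - i)%N%:Z by lia.
  have e2 : n%:Z - i%:Z - 2 * (n - i)%N%:Z = - (n - i)%N%:Z by lia.
  by rewrite e1 e2 mulrC.
have hE : \det (\matrix_(i < n.+1, j < n.+1)
            eta_it s (delta i * (n - i)%:Z) (Dq_it s i (fs j)) x) =
    \det (\matrix_(i < n.+1, j < n.+1)
            V i (if delta i == 1 then 0%N else (n - i)%N) 0 j).
  congr (\det _); apply/matrixP => i j; rewrite !mxE.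
  have hi : (i <= n)%N by rewrite -ltnS.
  case: (ltnP i n) => hin.
    case: (hdelta i hin) => ->.
      rewrite eqxx mul1r ev; last by lia.
      have e1 : n%:Z - i%:Z - 2 * 0%:Z = (n - i)%N%:Z by lia.
      by rewrite e1.
    rewrite ev; last by lia.
    have e1 : n%:Z - i%:Z - 2 * (n - i)%N%:Z = -1 * (n - i)%N%:Z by lia.
    by rewrite e1.
  have hin' : (i : nat) = n by lia.
  rewrite hin' subnn mulr0 if_same ev; last by lia.
  have e1 : n%:Z - n%:Z - 2 * 0%:Z = 0 by lia.
  by rewrite e1.
have hE0 : \det (\matrix_(i < n.+1, j < n.+1) V 0%N i 0 j) =
    \det (\matrix_(i < n.+1, j < n.+1) eta_it s (n%:Z - 2 * (i : nat)%:Z) (fs j) x).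
  congr (\det _); apply/matrixP => i j; rewrite !mxE /=.
  have hi : (i <= n)%N by rewrite -ltnS.
  rewrite -hx0 (eta_it_Xp _ hs hU); try lia.
  by rewrite add0r subr0.
have hprod : \prod_(i < n.+1) coef D i 0%N =
    \prod_(1 <= i < n.+1) \prod_(1 <= j < i.+1)
       (-1 / (eta_it s (i%:Z - 2 * j%:Z + 2) id x
              - eta_it s (i%:Z - 2 * j%:Z) id x)).
  pose g := fun a : int => -1 / (Xp s z (a + 2) - Xp s z a).
  transitivity (\prod_(i < n.+1) \prod_(s0 < i) g (n%:Z - i%:Z - s0%:Z - 1)).
    apply: eq_bigr => i _; rewrite coefE; apply: eq_bigr => s0 _.
    have hs0 : (s0 < i)%N := ltn_ord s0.
    rewrite /g /D; congr (-1 / (Xp _ _ _ - Xp _ _ _)); lia.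
  rewrite comb; apply: eq_big_nat => i /andP[hi1 hi2].
  apply: eq_big_nat => j /andP[hj1 hj2].
  rewrite /g -hx0 !(eta_it_Xp _ hs hU); try lia.
  by rewrite !add0r.
split.
  by rewrite hA (core1 hrec (fun i => delta i == 1)) hE.
rewrite hA (core1 hrec (fun _ => true)) /=.
by rewrite (core2 hrec hDnz) hprod hE0 mulrC.
Qed.
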